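(* Let $\mathbb A$ be an abelian category with enough projective objects. Let $(f_0,f_1):a\to b$ be a morphism in $\mathbb A^{[1]}_c$ and let $g:\mathrm{Ker}(a)\to\mathrm{Ker}(b)$ and $h:\mathrm{Coker}(a)\to\mathrm{Coker}(b)$ be the induced morphisms. Then $(f_0,f_1)$ is fully faithful in $\mathbb A^{[1]}_c$ if and only if $g$ is an isomorphism and $h$ is a monomorphism in $\mathbb A$.
   Context: Let $\mathbb A$ be an abelian category. The 2-category $\mathbb A^{[1]}$ has as objects the morphisms $a:A_1\to A_0$ of $\mathbb A$. For objects $a:A_1\to A_0$ and $b:B_1\to B_0$, a morphism $a\to b$ is a pair $(f_0,f_1)$ of morphisms $f_i:A_i\to B_i$ of $\mathbb A$ with $b f_1=f_0 a$; composition is componentwise. A 2-arrow $(f_0,f_1)\Rightarrow(g_0,g_1)$ between morphisms $a\to b$ is a morphism $\alpha:A_0\to B_1$ of $\mathbb A$ with $f_1-g_1=\alpha a$ and $f_0-g_0=b\alpha$; vertical composition is addition of such $\alpha$'s, and whiskering is given by $(h_0,h_1)\circ\alpha=h_1\alpha$ and $\alpha\circ(e_0,e_1)=\alpha e_0$. All 2-arrows are invertible, so each $\mathbf{Hom}(a,b)$ is a groupoid. $\mathbb A^{[1]}_c$ is the full 2-subcategory of $\mathbb A^{[1]}$ on the objects $a:A_1\to A_0$ with $A_0$ projective in $\mathbb A$. A morphism $(f_0,f_1):a\to b$ induces $g:\mathrm{Ker}(a)\to\mathrm{Ker}(b)$ (restriction of $f_1$) and $h:\mathrm{Coker}(a)\to\mathrm{Coker}(b)$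 (induced by $f_0$). A morphism $f:a\to b$ of $\mathbb A^{[1]}_c$ is fully faithful in $\mathbb A^{[1]}_c$ if for every object $x$ of $\mathbb A^{[1]}_c$ the functor $f\circ-:\mathbf{Hom}(x,a)\to\mathbf{Hom}(x,b)$ is full and faithful. *)

(* Defs.v *)
From HB Require Import structures.
From mathcomp Require Import all_boot all_algebra.
Set Implicit Arguments. Unset Strict Implicit. Unset Printing Implicit Defensive.
Import GRing.Theory.
Local Open Scope ring_scope.

Record PreAdd := {
  ob : Type;
  homC : ob -> ob -> zmodType;
  compC : forall A B C : ob, homC B C -> homC A B -> homC A C;
  idm : forall A : ob, homC A A;
  compA : forall A B C D (h : homC C D) (g : homC B C) (f : homC A B),
      compC h (compC g f) = compC (compC h g) f;
  comp1m : forall A B (f : homC A B), compC (idm B) f = f;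
  compm1 : forall A B (f : homC A B), compC f (idm A) = f;
  compDl : forall A B C (g g' : homC B C) (f : homC A B),
      compC (g + g') f = compC g f + compC g' f;
  compDr : forall A B C (g : homC B C) (f f' : homC A B),
      compC g (f + f') = compC g f + compC g f'
}.
Arguments compC {p A B C}.
Arguments idm {p}.

Section Defs.
Variable C : PreAdd.
Local Notation ob := (ob C).
Local Notation hom := (@Defs.homC C).
Local Notation "g \o f" := (compC g f).

Definition mono {A B : ob} (f : hom A B) : Prop :=
  forall X (x y : hom X A), f \o x = f \o y -> x = y.
Definition epi {A B : ob} (f : hom A B) : Prop :=
  forall Y (x y : hom B Y), x \o f = y \o f -> x = y.
Definition iso {A B : ob} (f : hom A B) : Prop :=
  exists g : hom B A, g \o f = idm A /\ f \o g = idm B.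

Definition is_kernel {A B K : ob} (f : hom A B) (k : hom K A) : Prop :=
  f \o k = 0 /\
  forall X (x : hom X A), f \o x = 0 -> exists! u : hom X K, k \o u = x.
Definition is_cokernel {A B Q : ob} (f : hom A B) (c : hom B Q) : Prop :=
  c \o f = 0 /\
  forall Y (y : hom B Y), y \o f = 0 -> exists! u : hom Q Y, u \o c = y.

Definition is_zero_object (Z : ob) : Prop :=
  forall A, (forall f g : hom A Z, f = g) /\ (forall f g : hom Z A, f = g).

Definition is_biproduct (A B P : ob) (i1 : hom A P) (i2 : hom B P)
  (p1 : hom P A) (p2 : hom P B) : Prop :=
  [/\ p1 \o i1 = idm A, p2 \o i2 = idm B, p1 \o i2 = 0, p2 \o i1 = 0
    & (i1 \o p1) + (i2 \o p2) = idm P].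

Definition is_abelian : Prop :=
  [/\       (forall A B, exists P (i1 : hom A P) (i2 : hom B P) (p1 : hom P A)
                    (p2 : hom P B), is_biproduct i1 i2 p1 p2),
      (forall A B (f : hom A B), exists K (k : hom K A), is_kernel f k),
      (forall A B (f : hom A B), exists Q (c : hom B Q), is_cokernel f c),
      (forall A B (f : hom A B), mono f -> exists Q (c : hom B Q), is_kernel c f)
    & (forall A B (f : hom A B), epi f -> exists K (k : hom K A), is_cokernel k f)]
  /\ (exists Z, is_zero_object Z).

Definition projective (P : ob) : Prop :=
  forall B D (e : hom B D) (p : hom P D), epi e -> exists l : hom P B, e \o l = p.

Definition enough_projectives : Prop :=
  forall A, exists P (e : hom P A), projective P /\ epi e.

(** The 2-category A^[1]. An object is an arrow [a : A1 -> A0]. *)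
Record arr := Arr { src : ob; tgt : ob; arrow : hom src tgt }.
Definition in_c (a : arr) : Prop := projective (tgt a).

Record mor (a b : arr) := Mor {
  m0 : hom (tgt a) (tgt b);
  m1 : hom (src a) (src b);
  m_comm : arrow b \o m1 = m0 \o arrow a }.

Definition mor_comp (a b c : arr) (g : mor b c) (f : mor a b) :
  hom (tgt a) (tgt c) * hom (src a) (src c) :=
  (m0 g \o m0 f, m1 g \o m1 f).

Definition two_arrow (a b : arr) (f0 g0 : hom (tgt a) (tgt b))
  (f1 g1 : hom (src a) (src b)) (alpha : hom (tgt a) (src b)) : Prop :=
  f1 - g1 = (alpha \o arrow a) /\ f0 - g0 = (arrow b \o alpha).

(** [f \o - : homC(x,a) -> homC(x,b)] is full and faithful (on the groupoids).
    On objects u : x -> a it sends u to f \o u; on 2-arrows it sends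
    alpha to the whiskering f \o alpha = f1 \o alpha. *)
Definition whisker_full_faithful (x a b : arr) (f : mor a b) : Prop :=
  forall u v : mor x a,
    (forall beta : hom (tgt x) (src b),
        two_arrow (m0 f \o m0 u) (m0 f \o m0 v) (m1 f \o m1 u) (m1 f \o m1 v) beta ->
        exists alpha : hom (tgt x) (src a),
          two_arrow (m0 u) (m0 v) (m1 u) (m1 v) alpha /\ (m1 f \o alpha) = beta)
    /\
    (forall alpha alpha' : hom (tgt x) (src a),
        two_arrow (m0 u) (m0 v) (m1 u) (m1 v) alpha ->
        two_arrow (m0 u) (m0 v) (m1 u) (m1 v) alpha' ->
        m1 f \o alpha = m1 f \o alpha' -> alpha = alpha').

Definition fully_faithful_c (a b : arr) (f : mor a b) : Prop :=
  forall x : arr, in_c x -> whisker_full_faithful x f.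

End Defs.

(* Main.v *)
Require Import Defs.
From mathcomp Require Import all_boot all_algebra.
Import GRing.Theory.
Local Open Scope ring_scope.
Set Implicit Arguments. Unset Strict Implicit.

Section H.
Variable C : PreAdd.
Local Notation hom := (@homC C).

Lemma comp0m (A B D : ob C) (f : hom A B) : compC (0 : hom B D) f = 0.
Proof.
have H := compDl (0 : hom B D) 0 f; rewrite addr0 in H.
by apply: (@addrI _ (compC (0 : hom B D) f)); rewrite addr0 -H.
Qed.

Lemma compm0 (A B D : ob C) (g : hom B D) : compC g (0 : hom A B) = 0.
Proof.
have H := compDr g (0 : hom A B) 0; rewrite addr0 in H.
by apply: (@addrI _ (compC g (0 : hom A B))); rewrite addr0 -H.
Qed.

Lemma compNl (A B D : ob C) (g : hom B D) (f : hom A B) :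
  compC (- g) f = - compC g f.
Proof.
apply/eqP; rewrite -subr_eq0 opprK -compDl addNr; exact/eqP/comp0m.
Qed.

Lemma compNr (A B D : ob C) (g : hom B D) (f : hom A B) :
  compC g (- f) = - compC g f.
Proof.
apply/eqP; rewrite -subr_eq0 opprK -compDr addNr; exact/eqP/compm0.
Qed.

Lemma compBl (A B D : ob C) (g g' : hom B D) (f : hom A B) :
  compC (g - g') f = compC g f - compC g' f.
Proof. by rewrite compDl compNl. Qed.

Lemma compBr (A B D : ob C) (g : hom B D) (f f' : hom A B) :
  compC g (f - f') = compC g f - compC g f'.
Proof. by rewrite compDr compNr. Qed.

Lemma kernel_mono (A B K : ob C) (f : hom A B) (k : hom K A) :
  is_kernel f k -> mono k.
Proof.
move=> [fk0 U] X x y E.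
have h0 : compC f (compC k x) = 0 by rewrite Defs.compA fk0 comp0m.
have [u [_ Hu]] := U X (compC k x) h0.
by rewrite -(Hu x erefl) (Hu y (esym E)).
Qed.

Lemma cokernel_epi (A B Q : ob C) (f : hom A B) (c : hom B Q) :
  is_cokernel f c -> epi c.
Proof.
move=> [cf0 U] Y x y E.
have h0 : compC (compC x c) f = 0 by rewrite -Defs.compA cf0 compm0.
have [u [_ Hu]] := U Y (compC x c) h0.
by rewrite -(Hu x erefl) (Hu y (esym E)).
Qed.

Lemma mono_comp (A B D : ob C) (g : hom B D) (f : hom A B) :
  mono g -> mono f -> mono (compC g f).
Proof. move=> mg mf X x y E; apply: mf; apply: mg; by rewrite !Defs.compA. Qed.

Lemma iso_of (HC : is_abelian C) (A B : ob C) (g : hom A B) :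
  mono g -> epi g -> iso g.
Proof.
move=> mg eg; case: HC => [[_ _ _ H4 _] _].
have [Q [c [cg0 U]]] := H4 _ _ g mg.
have c0 : c = 0 by apply: eg; rewrite cg0 comp0m.
have h0 : compC c (idm B) = 0 by rewrite c0 comp0m.
have [u [gu _]] := U B (idm B) h0.
exists u; split=> //; apply: mg; by rewrite Defs.compA gu Defs.comp1m Defs.compm1.
Qed.

Lemma image_lift (HC : is_abelian C) (A1 A0 Q P : ob C) (a : hom A1 A0)
  (ca : hom A0 Q) : is_cokernel a ca -> projective P ->
  forall d : hom P A0, compC ca d = 0 -> exists al : hom P A1, compC a al = d.
Proof.
move=> Hca PP d cd0.
case: HC => [[_ H2 _ H4 _] _].
have [K [k Hk]] := H2 _ _ ca.
have mk := kernel_mono Hk.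
have [e [ke _]] := (proj2 Hk) _ a (proj1 Hca).
have [d' [kd' _]] := (proj2 Hk) _ d cd0.
suff ee : epi e.
  have [l el] := PP _ _ e d' ee.
  by exists l; rewrite -ke -Defs.compA el.
move=> Y y z yz.
apply/eqP; rewrite -subr_eq0; apply/eqP.
set w := y - z.
have we : compC w e = 0 by rewrite /w compBl yz subrr.
have [M [m Hm]] := H2 _ _ w.
have [e' [me' _]] := (proj2 Hm) _ e we.
have mkm := mono_comp mk (kernel_mono Hm).
have [Q' [c' [c'km U']]] := H4 _ _ _ mkm.
have c'a : compC c' a = 0 by rewrite -ke -me' !Defs.compA -(Defs.compA c' k m) c'km comp0m.
have [t [tca _]] := (proj2 Hca) _ c' c'a.
have c'k : compC c' k = 0 by rewrite -tca -Defs.compA (proj1 Hk) compm0.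
have [s [kms _]] := U' _ k c'k.
have ms : compC m s = idm K by apply: mk; rewrite Defs.compA kms Defs.compm1.
by rewrite -(Defs.compm1 w) -ms Defs.compA (proj1 Hm) comp0m.
Qed.

End H.

Theorem lemma3p2 (C : PreAdd) (HC : is_abelian C) (HP : enough_projectives C)
  (a b : arr C) (Ha : in_c a) (Hb : in_c b) (f : mor a b)
  (Ka Kb : ob C) (ka : homC Ka (src a)) (kb : homC Kb (src b))
  (Hka : is_kernel (arrow a) ka) (Hkb : is_kernel (arrow b) kb)
  (Qa Qb : ob C) (ca : homC (tgt a) Qa) (cb : homC (tgt b) Qb)
  (Hca : is_cokernel (arrow a) ca) (Hcb : is_cokernel (arrow b) cb)
  (g : homC Ka Kb) (Hg : compC kb g = compC (m1 f) ka)
  (h : homC Qa Qb) (Hh : compC h ca = compC cb (m0 f)) :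
  fully_faithful_c f <-> (iso g /\ mono h).
Proof.
have mka := kernel_mono Hka; have mkb := kernel_mono Hkb.
split.
- move=> FF.
  pose xP (P : ob C) := @Arr C P P 0.
  have cm (P : ob C) (w : homC P (tgt a)) :
      compC (arrow a) (0 : homC P (src a)) = compC w (arrow (xP P)).
    by rewrite /= compm0 compm0.
  pose uw P w := @Mor C (xP P) a w 0 (cm P w).
  have gmono : mono g.
    move=> X y z E; apply/eqP; rewrite -subr_eq0; apply/eqP.
    set d := y - z.
    have gd : compC g d = 0 by rewrite /d compBr E subrr.
    have [P [e [PP ee]]] := HP X.
    apply: ee; rewrite comp0m.
    apply: mka; rewrite compm0.
    have [_ Ff] := FF (xP P) PP (uw P 0) (uw P 0).
    rewrite (Ff (compC ka (compC d e)) 0) //.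
    + split; first by rewrite /= subrr compm0.
      by rewrite /= subrr Defs.compA (proj1 Hka) comp0m.
    + by split; rewrite /= subrr compm0.
    + by rewrite compm0 (Defs.compA (m1 f)) -Hg -(Defs.compA kb) (Defs.compA g) gd comp0m compm0.
  have gepi : epi g.
    move=> Y y z E.
    have [P [e [PP ee]]] := HP Kb.
    apply: ee.
    have [Fu _] := FF (xP P) PP (uw P 0) (uw P 0).
    have [al [[_ al2] fal]] : exists al, two_arrow (m0 (uw P 0)) (m0 (uw P 0))
        (m1 (uw P 0)) (m1 (uw P 0)) al /\ compC (m1 f) al = compC kb e.
      apply: Fu; split; first by rewrite /= subrr compm0.
      by rewrite /= subrr Defs.compA (proj1 Hkb) comp0m.
    move: al2; rewrite /= subrr => al2.
    have [l [kl _]] := (proj2 Hka) _ al (esym al2).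
    have ge : compC g l = e.
      by apply: mkb; rewrite Defs.compA Hg -Defs.compA kl fal.
    by rewrite -ge !Defs.compA E.
  split; first exact: iso_of.
  move=> T y z E; apply/eqP; rewrite -subr_eq0; apply/eqP.
  set d := y - z.
  have hd : compC h d = 0 by rewrite /d compBr E subrr.
  have [P [e [PP ee]]] := HP T.
  apply: ee; rewrite comp0m.
  have [w cw] := PP _ _ ca (compC d e) (cokernel_epi Hca).
  have cbf : compC cb (compC (m0 f) w) = 0.
    by rewrite Defs.compA -Hh -Defs.compA cw Defs.compA hd comp0m.
  have [be bb] := image_lift HC Hcb PP cbf.
  have [Fu _] := FF (xP P) PP (uw P w) (uw P 0).
  have [al [[_ al2] _]] : exists al, two_arrow (m0 (uw P w)) (m0 (uw P 0))
        (m1 (uw P w)) (m1 (uw P 0)) al /\ compC (m1 f) al = be.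
    apply: Fu; split; first by rewrite /= subrr compm0.
    by rewrite /= compm0 subr0 bb.
  move: al2; rewrite /= subr0 => al2.
  by rewrite -cw al2 Defs.compA (proj1 Hca) comp0m.
- move=> [[gi [gig ggi]] mh] x PX u v; split.
  + move=> be [be1 be2].
    set d0 := m0 u - m0 v; set d1 := m1 u - m1 v.
    have cad0 : compC ca d0 = 0.
      apply: mh; rewrite compm0 Defs.compA Hh -Defs.compA /d0 compBr be2.
      by rewrite Defs.compA (proj1 Hcb) comp0m.
    have [a0 aa0] := image_lift HC Hca PX cad0.
    have bz : compC (arrow b) (be - compC (m1 f) a0) = 0.
      rewrite compBr -be2 Defs.compA m_comm -Defs.compA aa0 /d0 compBr subrr //.
    have [ga [kga _]] := (proj2 Hkb) _ _ bz.
    exists (a0 + compC ka (compC gi ga)).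
    have fal : compC (m1 f) (a0 + compC ka (compC gi ga)) = be.
      rewrite compDr (Defs.compA (m1 f) ka) -Hg -(Defs.compA kb g) (Defs.compA g gi) ggi Defs.comp1m kga.
      by rewrite addrC subrK.
    have aal : compC (arrow a) (a0 + compC ka (compC gi ga)) = d0.
      by rewrite compDr aa0 Defs.compA (proj1 Hka) comp0m addr0.
    split=> //; split=> //.
    apply/eqP; rewrite -subr_eq0; apply/eqP.
    set al := a0 + compC ka (compC gi ga).
    have az : compC (arrow a) (d1 - compC al (arrow x)) = 0.
      rewrite compBr Defs.compA aal /d1 compBr !m_comm /d0 compBl subrr //.
    have [eps [keps _]] := (proj2 Hka) _ _ az.
    have fz : compC (m1 f) (d1 - compC al (arrow x)) = 0.
      by rewrite compBr Defs.compA fal /d1 compBr be1 subrr.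
    have ge : compC g eps = 0.
      apply: mkb; rewrite compm0 Defs.compA Hg -Defs.compA keps //.
    have : eps = 0.
      by rewrite -(Defs.comp1m eps) -gig -Defs.compA ge compm0.
    by move=> e0; rewrite -keps e0 compm0.
  + move=> al al' [A1 A2] [A1' A2'] E.
    apply/eqP; rewrite -subr_eq0; apply/eqP.
    have az : compC (arrow a) (al - al') = 0 by rewrite compBr -A2 -A2' subrr.
    have [eps [keps _]] := (proj2 Hka) _ _ az.
    have ge : compC g eps = 0.
      apply: mkb; rewrite compm0 Defs.compA Hg -Defs.compA keps compBr E subrr //.
    have e0 : eps = 0 by rewrite -(Defs.comp1m eps) -gig -Defs.compA ge compm0.
    by rewrite -keps e0 compm0.
Qed.
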